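(* Let $M$ be an adequate monoid, $\chi:\Sigma\to M$ a function and $\tau$ the map defined below. Suppose $\mu:X\to Y$ is a morphism of idempotent $\Sigma$-trees. Then $\tau(Y)\tau(X)=\tau(Y)$ in $M$.
   Context: Adequate monoid: a monoid $M$ whose idempotents commute and in which every $\mathcal{L}^*$-class and every $\mathcal{R}^*$-class contains an idempotent, where $a\,\mathcal{L}^*\,b$ iff ($ax=ay\Leftrightarrow bx=by$ for all $x,y\in M$) and $a\,\mathcal{R}^*\,b$ iff ($xa=ya\Leftrightarrow xb=yb$ for all $x,y\in M$); $x^+$ and $x^*$ denote the unique idempotents $\mathcal{R}^*$- and $\mathcal{L}^*$-related to $x$. Trees: a $\Sigma$-tree is a finite directed graph whose underlying undirected graph is a tree, each edge $e$ having initial vertex $\alpha(e)$, terminal vertex $\omega(e)$ and label $\lambda(e)\in\Sigma$, with distinguished start and end vertices such that there is a (possibly empty) directed path from start to end vertex; it is idempotent if start vertex equals end vertex. A morphism $X\to Y$ maps vertices to vertices and edges to edges, preserving $\alpha$, $\omega$ and $\lambda$, and maps start/end vertex of $X$ to start/end vertex of $Y$. The map $\tau$ from idempotent trees to idempotents of $M$ is defined recursively on the number of edges: if $X$ has no edges, $\tau(X)=1$. Otherwise let $v$ be its start (= end) vertex; for an edge $e$ with $\alpha(e)=v$ let $X_e$ be the connected component of $X$ with edge $e$ removed containing $\omega(e)$, viewed as an idempotent tree with start and end vertex $\omega(e)$; for an edge $e$ with $\omega(e)=v$ let $X_e$ be the component of $X$ with $e$ removed containing $\alpha(e)$, viewed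 as an idempotent tree at $\alpha(e)$. Then $\tau(X)=\prod_{e:\alpha(e)=v}[\chi(\lambda(e))\tau(X_e)]^+\cdot\prod_{e:\omega(e)=v}[\tau(X_e)\chi(\lambda(e))]^*$ (a product of commuting idempotents, independent of order). *)

(* Defs.v *)
From mathcomp Require Import all_boot.
Set Implicit Arguments. Unset Strict Implicit. Unset Printing Implicit Defensive.

Section Monoid.
Variables (M : Type) (mul : M -> M -> M) (one : M).

Definition is_monoid : Prop :=
  (forall a b c, mul a (mul b c) = mul (mul a b) c) /\
  (forall a, mul one a = a) /\ (forall a, mul a one = a).

Definition idem (e : M) : Prop := mul e e = e.

Definition Lstar (a b : M) : Prop :=
  forall x y, mul a x = mul a y <-> mul b x = mul b y.
Definition Rstar (a b : M) : Prop :=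
  forall x y, mul x a = mul y a <-> mul x b = mul y b.

Definition is_adequate : Prop :=
  is_monoid /\
  (forall e f, idem e -> idem f -> mul e f = mul f e) /\
  (forall a, exists e, idem e /\ Lstar a e) /\
  (forall a, exists e, idem e /\ Rstar a e).
End Monoid.

Section Graph.
Variables (V E : finType) (alpha omega : E -> V).

Definition uadj (D : {set E}) : rel V := fun u w =>
  [exists f in D, ((alpha f == u) && (omega f == w)) ||
                  ((omega f == u) && (alpha f == w))].

Definition dadj : rel V := fun u w =>
  [exists f, (alpha f == u) && (omega f == w)].

Definition is_tree : Prop :=
  (forall u w, connect (uadj setT) u w) /\
  (forall e, ~~ connect (uadj (setT :\ e)) (alpha e) (omega e)).

Definition comp (D : {set E}) (e : E) (w : V) : {set E} :=
  [set f in D :\ e | connect (uadj (D :\ e)) w (alpha f)].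
End Graph.

Record sigma_tree (Sigma : Type) := SigmaTree {
  tV : finType;
  tE : finType;
  talpha : tE -> tV;
  tomega : tE -> tV;
  tlab : tE -> Sigma;
  tstart : tV;
  tend : tV;
  tree_ax : is_tree talpha tomega;
  path_ax : connect (dadj talpha tomega) tstart tend }.

Definition idempotent_tree (Sigma : Type) (X : sigma_tree Sigma) : Prop :=
  tstart X = tend X.

Definition tree_morphism (Sigma : Type) (X Y : sigma_tree Sigma)
    (fV : tV X -> tV Y) (fE : tE X -> tE Y) : Prop :=
  (forall e, talpha (fE e) = fV (talpha e)) /\
  (forall e, tomega (fE e) = fV (tomega e)) /\
  (forall e, tlab (fE e) = tlab e) /\
  fV (tstart X) = tstart Y /\ fV (tend X) = tend Y.

Section Tau.
Variables (M : Type) (mul : M -> M -> M) (one : M) (plus star : M -> M).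
Variables (Sigma : Type) (chi : Sigma -> M).
Variables (V E : finType) (alpha omega : E -> V) (lab : E -> Sigma).

(** tau of the idempotent tree with edge set D rooted at v (the component of
    v); recursion on the number of edges, via fuel n > #|D| *)
Fixpoint tau_aux (n : nat) (D : {set E}) (v : V) : M :=
  match n with
  | 0 => one
  | n'.+1 =>
    mul (\big[mul/one]_(e in D | alpha e == v)
           plus (mul (chi (lab e))
                     (tau_aux n' (comp alpha omega D e (omega e)) (omega e))))
        (\big[mul/one]_(e in D | omega e == v)
           star (mul (tau_aux n' (comp alpha omega D e (alpha e)) (alpha e))
                     (chi (lab e))))
  end.
End Tau.

Definition tau (M : Type) (mul : M -> M -> M) (one : M) (plus star : M -> M)
    (Sigma : Type) (chi : Sigma -> M) (X : sigma_tree Sigma) : M :=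
  tau_aux mul one plus star chi (@talpha _ X) (@tomega _ X) (@tlab _ X)
          #|tE X|.+1 setT (tstart X).

(* Main.v *)
Require Import Defs.
From mathcomp Require Import all_boot.
Set Implicit Arguments. Unset Strict Implicit. Unset Printing Implicit Defensive.

Lemma conn_transfer (T : finType) (r r' : rel T) (Q : T -> Prop) x :
  Q x -> (forall z z', Q z -> r z z' -> r' z z' /\ Q z') ->
  forall y, connect r x y -> connect r' x y /\ Q y.
Proof.
move=> Qx H y /connectP [p pth ->] {y}.
elim: p x Qx pth => [|z p IH] x Qx /=; first by split.
case/andP => rxz pth.
have [r'xz Qz] := H _ _ Qx rxz.
have [c Ql] := IH _ Qz pth.
split=> //. apply: connect_trans c. exact: connect1.
Qed.

Section Tau.
Variables (M : Type) (mul : M -> M -> M) (one : M) (plus star : M -> M).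
Local Notation "x ** y" := (mul x y) (at level 40, left associativity).
Hypothesis mulA : forall a b c, a ** (b ** c) = a ** b ** c.
Hypothesis mul1l : forall a, one ** a = a.
Hypothesis mul1r : forall a, a ** one = a.
Hypothesis idemC : forall e f, idem mul e -> idem mul f -> e ** f = f ** e.
Hypothesis plusI : forall x, idem mul (plus x).
Hypothesis plusR : forall x, Rstar mul x (plus x).
Hypothesis starI : forall x, idem mul (star x).
Hypothesis starL : forall x, Lstar mul x (star x).
Lemma plus_l x : plus x ** x = x.
Proof.
have := (plusR x (plus x) one).2. rewrite mul1l mul1l. apply. exact: plusI.
Qed.

Lemma star_r x : x ** star x = x.
Proof.
have := (starL x (star x) one).2. rewrite mul1r mul1r. apply. exact: starI.
Qed.

Lemma idemM e f : idem mul e -> idem mul f -> idem mul (e ** f).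
Proof.
rewrite /idem => He Hf.
by rewrite mulA -(mulA e f e) (idemC Hf He) mulA He -mulA Hf.
Qed.

Lemma plus_abs h y : h ** y = y -> h ** plus y = plus y.
Proof.
move=> H. have := (plusR y h one).1. rewrite !mul1l. by apply.
Qed.

Lemma star_abs k y : y ** k = y -> star y ** k = star y.
Proof.
move=> H. have := (starL y k one).1. rewrite !mul1r. by apply.
Qed.

Lemma plus_mono c A B : idem mul A -> idem mul B -> A ** B = A ->
  plus (c ** A) ** plus (c ** B) = plus (c ** A).
Proof.
move=> IA IB AB.
have h1 : plus (c ** B) ** (c ** A) = c ** A.
  have -> : c ** A = c ** B ** A by rewrite -mulA -(idemC IA IB) AB.
  by rewrite mulA plus_l.
by rewrite idemC // plus_abs.
Qed.

Lemma star_mono c A B : idem mul A -> idem mul B -> A ** B = A ->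
  star (A ** c) ** star (B ** c) = star (A ** c).
Proof.
move=> IA IB AB.
have h1 : A ** c ** star (B ** c) = A ** c.
  have -> : A ** c = A ** (B ** c) by rewrite mulA AB.
  by rewrite -mulA star_r.
exact: star_abs.
Qed.

Lemma plus_uniq y g : idem mul g ->
  (forall s t, s ** y = t ** y <-> s ** g = t ** g) -> plus y = g.
Proof.
move=> Ig H.
have e1 : plus y ** g = g.
  have := (H (plus y) one).1. rewrite !mul1l. apply. exact: plus_l.
have e2 : g ** plus y = plus y.
  have := (plusR y g one).1. rewrite !mul1l. apply.
  have := (H g one).2. rewrite !mul1l. apply. exact: Ig.
by rewrite -e2 idemC.
Qed.

Lemma star_uniq y g : idem mul g ->
  (forall s t, y ** s = y ** t <-> g ** s = g ** t) -> star y = g.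
Proof.
move=> Ig H.
have e1 : g ** star y = g.
  have := (H (star y) one).1. rewrite !mul1r. apply. exact: star_r.
have e2 : star y ** g = star y.
  have := (starL y g one).1. rewrite !mul1r. apply.
  have := (H g one).2. rewrite !mul1r. apply. exact: Ig.
by rewrite -e2 idemC.
Qed.

Lemma plus_e e x : idem mul e -> plus (e ** x) = e ** plus x.
Proof.
move=> Ie. apply: plus_uniq; first exact: idemM.
move=> s t. rewrite !mulA. exact: plusR.
Qed.

Lemma star_e x e : idem mul e -> star (x ** e) = star x ** e.
Proof.
move=> Ie. apply: star_uniq; first exact: idemM.
move=> s t. rewrite -!mulA. exact: starL.
Qed.

Section Big.
Variables (I : Type) (r : seq I) (P : pred I) (F : I -> M).

Lemma big_idem : (forall i, P i -> idem mul (F i)) ->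
  idem mul (\big[mul/one]_(i <- r | P i) F i).
Proof.
move=> H. apply: (big_ind (idem mul)); [by rewrite /idem mul1l | exact: idemM | exact: H].
Qed.

Lemma absorb_r x : (forall i, P i -> x ** F i = x) ->
  x ** \big[mul/one]_(i <- r | P i) F i = x.
Proof.
move=> H. apply: (big_rec (fun y => x ** y = x)) => //.
move=> i y Pi Hy. by rewrite mulA H.
Qed.

Lemma absorb_l y : (forall i, P i -> F i ** y = y) ->
  \big[mul/one]_(i <- r | P i) F i ** y = y.
Proof.
move=> H. apply: (big_rec (fun z => z ** y = y)) => //.
move=> i z Pi Hz. by rewrite -mulA Hz H.
Qed.
End Big.

Lemma factor (I : eqType) (r : seq I) (P : pred I) (F : I -> M) j :
  (forall i, P i -> idem mul (F i)) -> j \in r -> P j ->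
  \big[mul/one]_(i <- r | P i) F i ** F j = \big[mul/one]_(i <- r | P i) F i.
Proof.
move=> H; elim: r => // i r IH; rewrite in_cons big_cons => /orP [/eqP <- | jr] Pj.
  rewrite Pj -mulA (idemC (@big_idem _ r _ _ H) (H _ Pj)) mulA.
  by rewrite (H _ Pj).
case: ifP => Pi; last exact: IH.
by rewrite -mulA IH.
Qed.


Variables (Sigma : Type) (chi : Sigma -> M).
Section G.
Variables (V E : finType) (alpha omega : E -> V) (lab : E -> Sigma).

Local Notation T := (tau_aux mul one plus star chi alpha omega lab).


Lemma tau_idem n (D : {set E}) (v : V) : idem mul (T n D v).
Proof.
elim: n D v => [|n IH] D v /=; first by rewrite /idem mul1l.
apply: idemM => //; apply: big_idem => // i _.
Qed.

Lemma comp_sub (D : {set E}) (e : E) (w : V) : Defs.comp alpha omega D e w \subset D :\ e.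
Proof. by apply/subsetP => f; rewrite inE => /andP []. Qed.

Lemma comp_card (D : {set E}) (e : E) (w : V) n : e \in D -> #|D| < n.+1 -> #|Defs.comp alpha omega D e w| < n.
Proof.
move=> eD lt. have := subset_leq_card (comp_sub D e w).
rewrite (cardsD1 e D) eD in lt. move=> le. exact: leq_ltn_trans le lt.
Qed.

Lemma comp_mono (D D' : {set E}) (e : E) (w : V) : D' \subset D -> Defs.comp alpha omega D' e w \subset Defs.comp alpha omega D e w.
Proof.
move=> sub; apply/subsetP => f; rewrite !inE => /andP [/andP [fe fD] c].
rewrite fe (subsetP sub _ fD) /=.
have [] := @conn_transfer _ (uadj alpha omega (D' :\ e)) (uadj alpha omega (D :\ e))
   (fun _ => True) w I _ _ c => //.
move=> z z' _ /existsP [g /andP [gin H]]; split => //.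
apply/existsP; exists g; rewrite H andbT.
move: gin; rewrite !inE => /andP [-> /(subsetP sub) ->] //.
Qed.

Lemma out_factor n (D : {set E}) (v : V) (i : E) : i \in D -> alpha i == v ->
  T n.+1 D v ** plus (chi (lab i) ** T n (Defs.comp alpha omega D i (omega i)) (omega i)) = T n.+1 D v.
Proof.
move=> iD ai /=.
rewrite -mulA (idemC _ (plusI _)); last by apply: big_idem.
by rewrite mulA factor // ?iD ?mem_index_enum.
Qed.

Lemma in_factor n (D : {set E}) (v : V) (i : E) : i \in D -> omega i == v ->
  T n.+1 D v ** star (T n (Defs.comp alpha omega D i (alpha i)) (alpha i) ** chi (lab i)) = T n.+1 D v.
Proof.
move=> iD ai /=.
by rewrite -mulA factor // ?iD ?mem_index_enum.
Qed.

Lemma tau_mono n m (D D' : {set E}) (v : V) : D' \subset D -> #|D| < n ->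
  T n D v ** T m D' v = T n D v.
Proof.
elim: n m D D' v => [|n IH] m D D' v sub lt //.
case: m => [|m]; first by rewrite /= mul1r.
have e : T m.+1 D' v =
  \big[mul/one]_(e in D' | alpha e == v)
           plus (chi (lab e) ** T m (Defs.comp alpha omega D' e (omega e)) (omega e)) **
  \big[mul/one]_(e in D' | omega e == v)
           star (T m (Defs.comp alpha omega D' e (alpha e)) (alpha e) ** chi (lab e)) by [].
rewrite e mulA.
have eD : forall i, i \in D' -> i \in D by move=> i; apply: (subsetP sub).
have h1 : T n.+1 D v ** \big[mul/one]_(e in D' | alpha e == v)
           plus (chi (lab e) ** T m (Defs.comp alpha omega D' e (omega e)) (omega e))
          = T n.+1 D v.
  apply: absorb_r => // i /andP [iD' ai].
  rewrite -{1}(@out_factor n D v i (eD _ iD') ai) -mulA plus_mono //; try exact: tau_idem.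
  + by rewrite out_factor // eD.
  + apply: IH; [exact: comp_mono | exact: comp_card (eD _ iD') lt].
rewrite h1; apply: absorb_r => // i /andP [iD' ai].
rewrite -{1}(@in_factor n D v i (eD _ iD') ai) -mulA star_mono //; try exact: tau_idem.
+ by rewrite in_factor // eD.
+ apply: IH; [exact: comp_mono | exact: comp_card (eD _ iD') lt].
Qed.


Lemma tau_S n (D : {set E}) (v : V) : T n.+1 D v =
  \big[mul/one]_(e in D | alpha e == v)
     plus (chi (lab e) ** T n (Defs.comp alpha omega D e (omega e)) (omega e)) **
  \big[mul/one]_(e in D | omega e == v)
     star (T n (Defs.comp alpha omega D e (alpha e)) (alpha e) ** chi (lab e)).
Proof. by []. Qed.

Section Tree.
Hypothesis Htree : is_tree alpha omega.
Local Notation ua := (uadj alpha omega).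
Definition ends (g : E) (w x : V) :=
  (alpha g == w) && (omega g == x) || (omega g == w) && (alpha g == x).

Lemma ua_sym D : symmetric (ua D).
Proof.
move=> x y; apply/existsP/existsP; case=> h /andP [hD H]; exists h; rewrite hD /=;
  by case/orP: H => /andP [-> ->]; rewrite ?orbT.
Qed.

Lemma no_loop g : alpha g != omega g.
Proof.
apply/negP => /eqP e. have := Htree.2 g. by rewrite e connect0.
Qed.

Lemma sep g w x : ends g w x -> ~~ connect (ua (setT :\ g)) x w.
Proof.
have := Htree.2 g. rewrite /ends => H /orP [] /andP [/eqP <- /eqP <-] //.
by rewrite (sym_connect_sym (ua_sym _)).
Qed.

Lemma not_f f g w x z h : ends g w x -> (alpha f == w) || (omega f == w) ->
  connect (ua (setT :\ g)) x z -> h \in setT :\ g ->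
  (alpha h == z) || (omega h == z) -> h != f.
Proof.
move=> Eg Ef cz hin hz; apply/negP => /eqP hf; subst h.
have gf : f \in setT :\ g by [].
have adj1 : ua (setT :\ g) (alpha f) (omega f).
  apply/existsP; exists f; by rewrite gf !eqxx.
have adj2 : ua (setT :\ g) (omega f) (alpha f) by rewrite ua_sym.
have [ca co] : connect (ua (setT :\ g)) x (alpha f) /\ connect (ua (setT :\ g)) x (omega f).
  case/orP: hz => /eqP hz; rewrite -hz in cz; split => //;
    apply: connect_trans cz (connect1 _) => //.
have := sep Eg. by case/orP: Ef => /eqP <-; rewrite ?ca ?co.
Qed.

Lemma stageA f g w x y : ends g w x -> (alpha f == w) || (omega f == w) ->
  connect (ua (setT :\ g)) x y -> connect (ua (setT :\ f)) x y.
Proof.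
move=> Eg Ef c.
have [] // := @conn_transfer _ (ua (setT :\ g)) (ua (setT :\ f))
  (fun z => connect (ua (setT :\ g)) x z) x (connect0 _ _) _ y c.
move=> z z' cz /existsP [h /andP [hin H]]; split.
  apply/existsP; exists h; rewrite H andbT !inE andbT.
  apply: (not_f Eg Ef cz hin). by case/orP: H => /andP [-> _]; rewrite ?orbT.
apply: connect_trans cz (connect1 _). apply/existsP; exists h; by rewrite hin H.
Qed.

Lemma tree_comp f g w x : ends g w x -> g != f -> (alpha f == w) || (omega f == w) ->
  Defs.comp alpha omega setT g x \subset
  Defs.comp alpha omega (Defs.comp alpha omega setT f w) g x.
Proof.
move=> Eg gf Ef.
set C := Defs.comp alpha omega setT f w.
have wx : ua (setT :\ f) w x.
  apply/existsP; exists g; by rewrite in_setD1 gf in_setT.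
have inC : forall z h, connect (ua (setT :\ g)) x z -> h \in setT :\ g ->
    (alpha h == z) || (omega h == z) -> h \in C.
  move=> z h cz hin hz.
  have cah : connect (ua (setT :\ g)) x (alpha h).
    case/orP: hz => /eqP hz; first by rewrite hz.
    apply: connect_trans cz (connect1 _). apply/existsP; exists h.
    by rewrite hin hz !eqxx orbT.
  rewrite /C /Defs.comp inE in_setD1 (not_f Eg Ef cz hin hz) in_setT /=.
  apply: connect_trans (connect1 wx) _. exact: stageA Eg Ef cah.
apply/subsetP => h; rewrite /Defs.comp [in X in X -> _]inE => /andP [hin c].
rewrite inE; apply/andP; split.
  rewrite in_setD1 (inC (alpha h) h c hin) ?eqxx // andbT.
  by move: hin; rewrite in_setD1 => /andP [].
have [] // := @conn_transfer _ (ua (setT :\ g)) (ua (C :\ g))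
  (fun z => connect (ua (setT :\ g)) x z) x (connect0 _ _) _ _ c.
move=> z z' cz /existsP [h' /andP [hin' H]]; split.
  apply/existsP; exists h'; rewrite H andbT in_setD1.
  rewrite (inC z h' cz hin'); last by case/orP: H => /andP [-> _]; rewrite ?orbT.
  by rewrite andbT; move: hin'; rewrite in_setD1 => /andP [].
apply: connect_trans cz (connect1 _). apply/existsP; exists h'; by rewrite hin' H.
Qed.

Lemma reroot_out f :
  T #|E|.+1 setT (alpha f) ** plus (chi (lab f) ** T #|E|.+1 setT (omega f))
  = T #|E|.+1 setT (alpha f).
Proof.
have [k Ek] : exists k, #|E| = k.+1.
  have : 0 < #|E| by apply/card_gt0P; exists f.
  by case: #|E| => // k _; exists k.
rewrite Ek.
set Tu := T k.+2 setT (alpha f).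
set Tw := T k.+2 setT (omega f).
set C := Defs.comp alpha omega setT f (omega f).
set Aw := T k.+1 C (omega f).
set Bu := T k.+1 (Defs.comp alpha omega setT f (alpha f)) (alpha f).
set c := chi (lab f).
have ITu : idem mul Tu by apply: tau_idem.
have ITw : idem mul Tw by apply: tau_idem.
have IAw : idem mul Aw by apply: tau_idem.
have IBu : idem mul Bu by apply: tau_idem.
have cardT : #|[set: E]| < k.+2 by rewrite cardsT Ek.
have TuP : Tu ** plus (c ** Aw) = Tu by apply: out_factor.
have S1 : Tu ** Bu = Tu by apply: tau_mono.
have aQ : Tu ** c ** star (Bu ** c) = Tu ** c.
  by rewrite -{1}S1 -(mulA Tu Bu c) -mulA star_r mulA S1.
have nl := no_loop f.
have gC : forall g, g != f -> (alpha g == omega f) || (omega g == omega f) -> g \in C.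
  move=> g gf H; rewrite /C /Defs.comp inE in_setD1 gf in_setT /=.
  case/orP: H => /eqP H; first by rewrite H connect0.
  apply: connect1; apply/existsP; exists g.
  by rewrite in_setD1 gf in_setT H !eqxx orbT.
have cardC : #|C| < k.+1 by apply: comp_card.
have S2 : Tu ** c ** Aw ** Tw = Tu ** c ** Aw.
  rewrite /Tw tau_S mulA.
  have -> : Tu ** c ** Aw ** \big[mul/one]_(e in [set: E] | alpha e == omega f)
     plus (chi (lab e) ** T k.+1 (Defs.comp alpha omega [set: E] e (omega e)) (omega e))
     = Tu ** c ** Aw.
    apply: absorb_r => // g /andP [_ ag].
    have gf : g != f by apply/eqP => gf; subst g; rewrite (eqP ag) eqxx in nl.
    have gin : g \in C by apply: gC; rewrite ?ag.
    rewrite -mulA; congr (_ ** _).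
    have AF := @out_factor k C (omega f) g gin ag; rewrite -/Aw in AF.
    rewrite -{1}AF -mulA plus_mono //; try exact: tau_idem.
    apply: tau_mono; last exact: comp_card gin cardC.
    by apply: tree_comp gf _; rewrite /ends ?ag ?eqxx ?orbT.
  apply: absorb_r => // g /andP [_ og].
  have [-> | gf] := eqVneq g f.
    rewrite -/Bu -/c -mulA (idemC IAw (starI _)) mulA aQ //.
  have gin : g \in C by apply: gC; rewrite ?og ?orbT.
  rewrite -mulA; congr (_ ** _).
  have AF := @in_factor k C (omega f) g gin og; rewrite -/Aw in AF.
  rewrite -{1}AF -mulA star_mono //; try exact: tau_idem.
  apply: tau_mono; last exact: comp_card gin cardC.
  by apply: tree_comp gf _; rewrite /ends ?og ?eqxx ?orbT.
have S3 : plus (Tu ** c ** Aw) = Tu by rewrite -mulA plus_e // TuP.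
set z := Tu ** c ** Tw.
have S4 : z ** Aw = Tu ** c ** Aw by rewrite /z -mulA (idemC ITw IAw) mulA S2.
have S5 : plus z ** plus (z ** Aw) = plus (z ** Aw) by apply: plus_abs; rewrite mulA plus_l.
have S6 : plus z = Tu ** plus (c ** Tw) by rewrite /z -mulA plus_e.
rewrite S4 S3 in S5.
rewrite -S6.
have S7 : Tu ** plus z = plus z by rewrite S6 mulA ITu.
by rewrite -S7 idemC.
Qed.

Lemma reroot_in f :
  T #|E|.+1 setT (omega f) ** star (T #|E|.+1 setT (alpha f) ** chi (lab f))
  = T #|E|.+1 setT (omega f).
Proof.
have [k Ek] : exists k, #|E| = k.+1.
  have : 0 < #|E| by apply/card_gt0P; exists f.
  by case: #|E| => // k _; exists k.
rewrite Ek.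
set Tu := T k.+2 setT (alpha f).
set Tw := T k.+2 setT (omega f).
set C := Defs.comp alpha omega setT f (alpha f).
set Aw := T k.+1 (Defs.comp alpha omega setT f (omega f)) (omega f).
set Bu := T k.+1 C (alpha f).
set c := chi (lab f).
have ITu : idem mul Tu by apply: tau_idem.
have ITw : idem mul Tw by apply: tau_idem.
have IAw : idem mul Aw by apply: tau_idem.
have IBu : idem mul Bu by apply: tau_idem.
have cardT : #|[set: E]| < k.+2 by rewrite cardsT Ek.
have TwQ : Tw ** star (Bu ** c) = Tw by apply: in_factor.
have S1 : Tw ** Aw = Tw by apply: tau_mono.
have Pa : plus (c ** Aw) ** (c ** Tw) = c ** Tw.
  have eT : Tw = Aw ** Tw by rewrite idemC // S1.
  by rewrite eT (mulA c) mulA plus_l.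
have nl := no_loop f.
have gC : forall g, g != f -> (alpha g == alpha f) || (omega g == alpha f) -> g \in C.
  move=> g gf H; rewrite /C /Defs.comp inE in_setD1 gf in_setT /=.
  case/orP: H => /eqP H; first by rewrite H connect0.
  apply: connect1; apply/existsP; exists g.
  by rewrite in_setD1 gf in_setT H !eqxx orbT.
have cardC : #|C| < k.+1 by apply: comp_card.
have S2 : Tu ** (Bu ** (c ** Tw)) = Bu ** (c ** Tw).
  rewrite /Tu tau_S -mulA.
  have -> : \big[mul/one]_(e in [set: E] | omega e == alpha f)
     star (T k.+1 (Defs.comp alpha omega [set: E] e (alpha e)) (alpha e) ** chi (lab e))
     ** (Bu ** (c ** Tw)) = Bu ** (c ** Tw).
    apply: absorb_l => // g /andP [_ og].
    have gf : g != f by apply/eqP => gf; subst g; rewrite (eqP og) eqxx in nl.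
    have gin : g \in C by apply: gC; rewrite ?og ?orbT.
    rewrite mulA; congr (_ ** _).
    rewrite (idemC (starI _) IBu).
    have AF := @in_factor k C (alpha f) g gin og; rewrite -/Bu in AF.
    rewrite -{1}AF -mulA star_mono //; try exact: tau_idem.
    apply: tau_mono; last exact: comp_card gin cardC.
    by apply: tree_comp gf _; rewrite /ends ?og ?eqxx ?orbT.
  apply: absorb_l => // g /andP [_ ag].
  have [-> | gf] := eqVneq g f.
    by rewrite -/Aw -/c mulA (idemC (plusI _) IBu) -mulA Pa.
  have gin : g \in C by apply: gC; rewrite ?ag ?orbT.
  rewrite mulA; congr (_ ** _).
  rewrite (idemC (plusI _) IBu).
  have AF := @out_factor k C (alpha f) g gin ag; rewrite -/Bu in AF.
  rewrite -{1}AF -mulA plus_mono //; try exact: tau_idem.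
  apply: tau_mono; last exact: comp_card gin cardC.
  by apply: tree_comp gf _; rewrite /ends ?ag ?eqxx ?orbT.
have S3 : star (Bu ** (c ** Tw)) = Tw by rewrite mulA star_e // idemC // TwQ.
have S4 : Bu ** (Tu ** c ** Tw) = Bu ** (c ** Tw).
  by rewrite -(mulA Tu c Tw) (mulA Bu Tu) (idemC IBu ITu) -(mulA Tu Bu) S2.
set z := Tu ** c.
set y := z ** Tw.
have S5 : star (Bu ** y) ** star y = star (Bu ** y) by apply: star_abs; rewrite -mulA star_r.
have S6 : star y = star z ** Tw by rewrite /y star_e.
rewrite S4 S3 in S5.
rewrite (idemC ITw (starI _)).
rewrite -S6.
have S7 : star y ** Tw = star y by rewrite S6 -mulA ITw.
by rewrite -S7 idemC.
Qed.

End Tree.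
End G.

Lemma xind (X Y : sigma_tree Sigma) (fV : tV X -> tV Y) (fE : tE X -> tE Y) :
  is_tree (@talpha _ Y) (@tomega _ Y) -> tree_morphism fV fE ->
  forall n D v,
  tau_aux mul one plus star chi (@talpha _ Y) (@tomega _ Y) (@tlab _ Y) #|tE Y|.+1 setT (fV v) **
  tau_aux mul one plus star chi (@talpha _ X) (@tomega _ X) (@tlab _ X) n D v =
  tau_aux mul one plus star chi (@talpha _ Y) (@tomega _ Y) (@tlab _ Y) #|tE Y|.+1 setT (fV v).
Proof.
move=> HY [ha [ho [hl _]]].
elim=> [|n IH] D v; first by rewrite /= mul1r.
set TY := tau_aux _ _ _ _ _ _ _ _ _ _ (fV v).
rewrite tau_S mulA.
have h1 : forall x y : M, x = y -> x = y by [].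
have -> : TY ** \big[mul/one]_(e in D | talpha e == v)
     plus (chi (tlab e) ** tau_aux mul one plus star chi (@talpha _ X) (@tomega _ X) (@tlab _ X) n
       (Defs.comp (@talpha _ X) (@tomega _ X) D e (tomega e)) (tomega e)) = TY.
  apply: absorb_r => // e /andP [_ /eqP ae].
  have R := @reroot_out _ _ _ _ (@tlab _ Y) HY (fE e).
  rewrite ha hl ho ae -/TY in R.
  rewrite -{1}R -mulA plus_mono //; try exact: tau_idem.
apply: absorb_r => // e /andP [_ /eqP oe].
have R := @reroot_in _ _ _ _ (@tlab _ Y) HY (fE e).
rewrite ha hl ho oe -/TY in R.
rewrite -{1}R -mulA star_mono //; try exact: tau_idem.
Qed.

End Tau.

Theorem lemma5p8 (M : Type) (mul : M -> M -> M) (one : M)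
  (plus star : M -> M) (Sigma : Type) (chi : Sigma -> M)
  (X Y : sigma_tree Sigma) (fV : tV X -> tV Y) (fE : tE X -> tE Y) :
  is_adequate mul one ->
  (forall x, idem mul (plus x) /\ Rstar mul x (plus x)) ->
  (forall x, idem mul (star x) /\ Lstar mul x (star x)) ->
  idempotent_tree X -> idempotent_tree Y ->
  tree_morphism fV fE ->
  mul (tau mul one plus star chi Y) (tau mul one plus star chi X)
  = tau mul one plus star chi Y.
Proof.
move=> [[mA [m1l m1r]] [iC _]] HP HS _ _ Hm.
have Hm' := Hm. case: Hm' => _ [_ [_ [hs _]]].
rewrite /tau -hs.
apply: (xind mA m1l m1r iC (fun x => (HP x).1) (fun x => (HP x).2)
  (fun x => (HS x).1) (fun x => (HS x).2)) => //.
all: first [exact: tree_ax | exact: Hm].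
Qed.
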